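(* Let $L\ge1$ and let $\beta=x_1^{a_1}x_2^{a_2}\cdots x_1^{a_{2L-1}}x_2^{a_{2L}}\in\mathcal{B}_3$ with total degree $D=\sum_{i=1}^{2L}a_i$. (a) If $a_i\ge1$ for all $i$, then $\deg V_3(\beta)\le 3D-2L$. (b) If $a_i\ge2$ for all $i$ and $L\le4$, then $\deg V_3(\beta)=3D-2L$ and the leading coefficient of $V_3(\beta)$ is $1$.
   Context: $\mathcal{B}_3$ is the 3-strand braid group with standard Artin generators $x_1,x_2$; $V_3(\beta)$ is the Jones polynomial of the closure $\widehat\beta$, normalized by $V(\text{unknot})=1$ and $q^{-1}V_{L_+}-qV_{L_-}=(q^{1/2}-q^{-1/2})V_{L_0}$, in the variable $s=q^{-1/2}$ (a Laurent polynomial in $s$). Conventions: closures of $\alpha x_i^{e+2}\gamma$, $\alpha x_i^{e+1}\gamma$, $\alpha x_i^{e}\gamma$ play the roles of $L_-,L_0,L_+$ (e.g. the closure of $x_1^2\in\mathcal B_2$ has Jones polynomial $-s-s^5$). $\deg$ denotes the highest exponent of $s$. *)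

(* Defs.v *)
(* Jones polynomial of closures of 3-braids, via the
   Kauffman bracket state sum realised in the Temperley-Lieb algebra TL_3. *)
From mathcomp Require Import all_boot all_algebra.
Set Implicit Arguments. Unset Strict Implicit. Unset Printing Implicit Defensive.
Import GRing.Theory Num.Theory.
Local Open Scope ring_scope.

(* A letter of a braid word in B_3: (g, inv) stands for x_1 (g = false) or
   x_2 (g = true), raised to the power -1 if inv = true, +1 otherwise. *)
Definition letter := (bool * bool)%type.
Definition bword := seq letter.

(* Elements of TL_3 with coefficients in Z[s], on the basis
   1, e1, e2, e1e2, e2e1. *)
Record tl := TL { tc1 : {poly int}; tce1 : {poly int}; tce2 : {poly int};
                  tce12 : {poly int}; tce21 : {poly int} }.

(* s * d, where d = -(s + s^-1) is the loop value (A = s^(1/2), A^2 = s). *)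
Definition Dp : {poly int} := - ('X^2 + 1).

(* Right multiplication by the Kauffman-bracket-times-writhe weight of a
   letter.  x_i (a NEGATIVE crossing in the paper's convention) has weight
   -(s + s^2 e_i); x_i^-1 has weight -(s^-1 + s^-2 e_i), which is multiplied
   by s^3 to stay polynomial (recorded in [Jshift]).  Products e_i * e_i
   contribute a loop factor d = Dp / s. *)
Definition tl_step (X : tl) (l : letter) : tl :=
  let: (u, v, w) := if l.2 then ('X^2, 'X, Dp) else ('X, 'X^2, 'X * Dp) in
  let: TL c a b c12 c21 := X in
  if ~~ l.1 then
    TL (- (u * c)) (- (u * a + v * (c + c12) + w * a)) (- (u * b))
       (- (u * c12)) (- (u * c21 + v * b + w * c21))
  else
    TL (- (u * c)) (- (u * a)) (- (u * b + v * (c + c21) + w * b))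
       (- (u * c12 + v * a + w * c12)) (- (u * c21)).

Definition tl_word (w : bword) : tl := foldl tl_step (TL 1 0 0 0 0) w.

(* s^(Jshift w) * V_3(w)(s) = Jpoly w, where the closure trace sends a basis
   diagram with l loops to d^(l-1) (multiplied here by s^2). *)
Definition Jpoly (w : bword) : {poly int} :=
  let: TL c a b c12 c21 := tl_word w in
  c * Dp ^+ 2 + (a + b) * ('X * Dp) + (c12 + c21) * 'X^2.

Definition Jshift (w : bword) : nat := (2 + 3 * count snd w)%N.

(* Laurent polynomials in s, represented as p(s) * s^(-k). *)
Record laurent := Laurent { lpoly : {poly int}; lshift : nat }.

Definition ldeg (f : laurent) : int := ((size (lpoly f)).-1)%:Z - (lshift f)%:Z.
Definition llead (f : laurent) : int := lead_coef (lpoly f).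

(* V_3(beta) : the Jones polynomial of the closure, in the variable s = q^(-1/2). *)
Definition V3 (w : bword) : laurent := Laurent (Jpoly w) (Jshift w).

(* beta = x_1^{a_1} x_2^{a_2} x_1^{a_3} ... for a = [:: a_1; a_2; ...]. *)
Definition braid_of_exps (a : seq nat) : bword :=
  flatten [seq nseq p.2 (odd p.1, false) | p <- zip (iota 0 (size a)) a].

(* Main.v *)
Require Import Defs.
From mathcomp Require Import all_boot all_algebra.
From mathcomp Require Import ring zify.
Import GRing.Theory Num.Theory.
Local Open Scope ring_scope.
Set Implicit Arguments. Unset Strict Implicit.

Definition x1 : letter := (false, false).
Definition x2 : letter := (true, false).

Lemma step1 c a b c12 c21 : tl_step (TL c a b c12 c21) x1 =
  TL (- ('X * c)) ('X^3 * a - 'X^2 * (c + c12)) (- ('X * b)) (- ('X * c12))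
     ('X^3 * c21 - 'X^2 * b).
Proof. rewrite /tl_step /= /Dp; congr TL; ring. Qed.

Lemma step2 c a b c12 c21 : tl_step (TL c a b c12 c21) x2 =
  TL (- ('X * c)) (- ('X * a)) ('X^3 * b - 'X^2 * (c + c21))
     ('X^3 * c12 - 'X^2 * a) (- ('X * c21)).
Proof. rewrite /tl_step /= /Dp; congr TL; ring. Qed.

Lemma leD (p q : {poly int}) n :
  (size p <= n)%N -> (size q <= n)%N -> (size (p + q)%R <= n)%N.
Proof. move=> hp hq; apply: leq_trans (size_polyD _ _) _; by rewrite geq_max hp hq. Qed.

Lemma leN (p : {poly int}) n : (size p <= n)%N -> (size (- p)%R <= n)%N.
Proof. by rewrite size_polyN. Qed.

Lemma leXn (p : {poly int}) k n : (size p <= n - k)%N -> (size ('X^k * p)%R <= n)%N.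
Proof.
move=> h; have [->|p0] := eqVneq p 0; first by rewrite mulr0 size_poly0.
apply: leq_trans (size_polyMleq _ _) _; rewrite size_polyXn.
have : (0 < size p)%N by rewrite size_poly_gt0. lia.
Qed.

Lemma leX (p : {poly int}) n : (size p <= n.-1)%N -> (size ('X * p)%R <= n)%N.
Proof.
move=> h; have [->|p0] := eqVneq p 0; first by rewrite mulr0 size_poly0.
apply: leq_trans (size_polyMleq _ _) _; rewrite size_polyX.
have : (0 < size p)%N by rewrite size_poly_gt0. lia.
Qed.

Lemma leXp k n : (k.+1 <= n)%N -> (size ('X^k : {poly int}) <= n)%N.
Proof. by rewrite size_polyXn. Qed.

Ltac szl := match goal with h : is_true (size ?p <= _)%N |- is_true (size ?p <= _)%N =>
  apply: (leq_trans h); lia end.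
Ltac szb := repeat first [apply: leD | apply: leN | apply: leXn | apply: leX | apply: leXp];
  first [szl | lia].

Definition Ea (T : nat) (S : tl) : Prop := let: TL c a b c12 c21 := S in
  [/\ (size c <= T.+1)%N, (size a <= T)%N, (size b <= T)%N, (size c12 <= T.+1)%N
    & (size c21 <= T - 1)%N].
Definition Ea' (T : nat) (S : tl) : Prop := let: TL c a b c12 c21 := S in
  [/\ (size c <= T - 1)%N, (size a <= T)%N, (size b <= T)%N, (size c12 <= T.+1)%N
    & (size c21 <= T - 1)%N].
Definition Oa (T : nat) (S : tl) : Prop := let: TL c a b c12 c21 := S in
  [/\ (size c <= T)%N, (size a <= T.+1)%N, (size b <= T - 1)%N, (size c12 <= T)%N
    & (size c21 <= T)%N].

Lemma Ea_x1 T S : Ea T S -> Oa (T + 2) (tl_step S x1).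
Proof. case: S => c a b c12 c21 [*]; rewrite step1 /=; split; szb. Qed.
Lemma Oa_x1 T S : Oa T S -> Oa (T + 3) (tl_step S x1).
Proof. case: S => c a b c12 c21 [*]; rewrite step1 /=; split; szb. Qed.
Lemma Oa_x2 T S : Oa T S -> Ea' (T + 2) (tl_step S x2).
Proof. case: S => c a b c12 c21 [*]; rewrite step2 /=; split; szb. Qed.
Lemma Ea'_x2 T S : Ea' T S -> Ea' (T + 3) (tl_step S x2).
Proof. case: S => c a b c12 c21 [*]; rewrite step2 /=; split; szb. Qed.
Lemma Ea'_Ea T S : Ea' T S -> Ea T S.
Proof. case: S => c a b c12 c21 [*] /=; split; szl. Qed.

Lemma Oa_x1n m T S : Oa T S -> Oa (T + 3 * m) (foldl tl_step S (nseq m x1)).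
Proof.
elim: m T S => [|m IH] T S h /=; first by rewrite muln0 addn0.
have := IH _ _ (Oa_x1 h). by have -> : (T + 3 * m.+1 = T + 3 + 3 * m)%N by lia.
Qed.
Lemma Ea'_x2n m T S : Ea' T S -> Ea' (T + 3 * m) (foldl tl_step S (nseq m x2)).
Proof.
elim: m T S => [|m IH] T S h /=; first by rewrite muln0 addn0.
have := IH _ _ (Ea'_x2 h). by have -> : (T + 3 * m.+1 = T + 3 + 3 * m)%N by lia.
Qed.

Lemma Ea_pair m1 m2 T S : (1 <= m1)%N -> (1 <= m2)%N -> Ea T S ->
  Ea' (T + 3 * m1 + 3 * m2 - 2) (foldl tl_step S (nseq m1 x1 ++ nseq m2 x2)).
Proof.
case: m1 => // m1; case: m2 => // m2 _ _ h; rewrite foldl_cat /=.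
have h2 := Ea'_x2n m2 (Oa_x2 (Oa_x1n m1 (Ea_x1 h))).
by have -> : (T + 3 * m1.+1 + 3 * m2.+1 - 2 = T + 2 + 3 * m1 + 2 + 3 * m2)%N by lia.
Qed.

Definition Eb (T : nat) (S : tl) : Prop := let: TL c a b c12 c21 := S in
  (exists q, c + c12 = 'X^T + q /\ (size q <= T)%N) /\
  [/\ (size c <= T.+1)%N, (size a <= T - 2)%N, (size b <= T - 2)%N
    & (size c21 <= T - 5)%N].
Definition Eb' (T : nat) (S : tl) : Prop := let: TL c a b c12 c21 := S in
  (exists q, c + c12 = 'X^T + q /\ (size q <= T)%N) /\
  [/\ (size c <= T - 2)%N, (size a <= T - 2)%N, (size b <= T - 2)%N
    & (size c21 <= T - 5)%N].
Definition O1b (T : nat) (S : tl) : Prop := let: TL c a b c12 c21 := S in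
  (exists q, a = - 'X^T + q /\ (size q <= T)%N) /\
  [/\ (size b <= T - 3)%N, (size c12 <= T)%N, (size c21 <= T - 2)%N
    & (size c <= T)%N].
Definition Ob (T : nat) (S : tl) : Prop := let: TL c a b c12 c21 := S in
  (exists q, a = - 'X^T + q /\ (size q <= T)%N) /\
  [/\ (size b <= T - 5)%N, (size c12 <= T - 2)%N, (size c21 <= T - 2)%N
    & (size c <= T - 2)%N].
Definition E1b (T : nat) (S : tl) : Prop := let: TL c a b c12 c21 := S in
  (exists q, c12 = 'X^T + q /\ (size q <= T)%N) /\
  [/\ (size b <= T - 2)%N, (size a <= T)%N, (size c21 <= T - 3)%N
    & (size c <= T - 3)%N].

Lemma Eb_x1 T S : Eb T S -> O1b (T + 2) (tl_step S x1).
Proof.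
case: S => c a b c12 c21 [[q [HP Hq]] [*]]; rewrite step1 /=.
have Hc12 : c12 = 'X^T + q - c by rewrite -HP; ring.
split; last by rewrite Hc12; split; szb.
exists ('X^3 * a - 'X^2 * q); split; last by szb.
by rewrite HP (exprD _ T 2); ring.
Qed.
Lemma O1b_x1 T S : O1b T S -> Ob (T + 3) (tl_step S x1).
Proof.
case: S => c a b c12 c21 [[q [Ha Hq]] [*]]; rewrite step1 /=.
split; last by split; szb.
exists ('X^3 * q - 'X^2 * (c + c12)); split; last by szb.
by rewrite Ha (exprD _ T 3); ring.
Qed.
Lemma Ob_x1 T S : Ob T S -> Ob (T + 3) (tl_step S x1).
Proof.
case: S => c a b c12 c21 [[q [Ha Hq]] [*]]; rewrite step1 /=.
split; last by split; szb.
exists ('X^3 * q - 'X^2 * (c + c12)); split; last by szb.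
by rewrite Ha (exprD _ T 3); ring.
Qed.
Lemma Ob_x2 T S : Ob T S -> E1b (T + 2) (tl_step S x2).
Proof.
case: S => c a b c12 c21 [[q [Ha Hq]] [*]]; rewrite step2 /=.
split; last by rewrite Ha; split; szb.
exists ('X^3 * c12 - 'X^2 * q); split; last by szb.
by rewrite Ha (exprD _ T 2); ring.
Qed.
Lemma E1b_x2 T S : E1b T S -> Eb' (T + 3) (tl_step S x2).
Proof.
case: S => c a b c12 c21 [[q [Ha Hq]] [*]]; rewrite step2 /=.
split; last by split; szb.
exists ('X^3 * q - 'X^2 * a - 'X * c); split; last by szb.
by rewrite Ha (exprD _ T 3); ring.
Qed.
Lemma Eb'_x2 T S : Eb' T S -> Eb' (T + 3) (tl_step S x2).
Proof.
case: S => c a b c12 c21 [[q [HP Hq]] [*]]; rewrite step2 /=.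
have Hc12 : c12 = 'X^T + (q - c) by rewrite -[c12](addKr c) HP; ring.
split; last by split; szb.
exists ('X^3 * (q - c) - 'X^2 * a - 'X * c); split; last by szb.
by rewrite Hc12 (exprD _ T 3); ring.
Qed.
Lemma Eb'_Eb T S : Eb' T S -> Eb T S.
Proof. case: S => c a b c12 c21 [H [*]] /=; split => //; split; szl. Qed.

Lemma Ob_x1n m T S : Ob T S -> Ob (T + 3 * m) (foldl tl_step S (nseq m x1)).
Proof.
elim: m T S => [|m IH] T S h /=; first by rewrite muln0 addn0.
have := IH _ _ (Ob_x1 h). by have -> : (T + 3 * m.+1 = T + 3 + 3 * m)%N by lia.
Qed.
Lemma Eb'_x2n m T S : Eb' T S -> Eb' (T + 3 * m) (foldl tl_step S (nseq m x2)).
Proof.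
elim: m T S => [|m IH] T S h /=; first by rewrite muln0 addn0.
have := IH _ _ (Eb'_x2 h). by have -> : (T + 3 * m.+1 = T + 3 + 3 * m)%N by lia.
Qed.

Lemma Eb_pair m1 m2 T S : (2 <= m1)%N -> (2 <= m2)%N -> Eb T S ->
  Eb' (T + 3 * m1 + 3 * m2 - 2) (foldl tl_step S (nseq m1 x1 ++ nseq m2 x2)).
Proof.
case: m1 => [|[|m1]] //; case: m2 => [|[|m2]] // _ _ h; rewrite foldl_cat /=.
have h2 := Eb'_x2n m2 (E1b_x2 (Ob_x2 (Ob_x1n m1 (O1b_x1 (Eb_x1 h))))).
by have -> : (T + 3 * m1.+2 + 3 * m2.+2 - 2 = T + 2 + 3 + 3 * m1 + 2 + 3 + 3 * m2)%N by lia.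
Qed.

Definition bw_from (k : nat) (a : seq nat) : bword :=
  flatten [seq nseq p.2 (odd p.1, false) | p <- zip (iota k (size a)) a].

Lemma bw_cons k m r : bw_from k (m :: r) = nseq m (odd k, false) ++ bw_from k.+1 r.
Proof. by []. Qed.

Lemma count_bw k a : count snd (bw_from k a) = 0%N.
Proof.
elim: a k => [|m r IH] k //; by rewrite bw_cons count_cat count_nseq IH /= mul0n.
Qed.

Lemma sumn_ge a : (forall ai, ai \in a -> 1 <= ai)%N -> (size a <= sumn a)%N.
Proof.
elim: a => [|m r IH] //= h.
have h1 := h m (mem_head _ _).
have h2 : (size r <= sumn r)%N by apply: IH => ai hi; apply: h; rewrite in_cons hi orbT.
by rewrite -add1n; apply: leq_add.
Qed.

Lemma mainA L : forall a k T S T', size a = (2 * L.+1)%N ->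
  (forall ai, ai \in a -> 1 <= ai)%N -> ~~ odd k -> Ea T S ->
  (T' + 2 * L.+1 = T + 3 * sumn a)%N -> Ea' T' (foldl tl_step S (bw_from k a)).
Proof.
elim: L => [|L IH] [|m1 [|m2 r]] // k T S T' /= hs ha hk hE hT.
all: have h1 := ha m1 (mem_head _ _).
all: have h2 : (1 <= m2)%N by apply: ha; rewrite in_cons mem_head orbT.
all: have ok1 : odd k = false by apply/negbTE.
all: rewrite bw_cons bw_cons /= ok1 catA foldl_cat.
- case: r hs hT ha => // _ hT _; rewrite /= addn0 in hT.
  have -> : T' = (T + 3 * m1 + 3 * m2 - 2)%N by lia.
  exact: Ea_pair.
- apply: (IH r k.+2 (T + 3 * m1 + 3 * m2 - 2)%N) => //.
  + by move: hs; rewrite mulnS; case.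
  + by move=> ai hi; apply: ha; rewrite !in_cons hi !orbT.
  + by rewrite /= negbK.
  + exact/Ea'_Ea/Ea_pair.
  + lia.
Qed.

Lemma mainB L : forall a k T S T', size a = (2 * L.+1)%N ->
  (forall ai, ai \in a -> 2 <= ai)%N -> ~~ odd k -> Eb T S ->
  (T' + 2 * L.+1 = T + 3 * sumn a)%N -> Eb' T' (foldl tl_step S (bw_from k a)).
Proof.
elim: L => [|L IH] [|m1 [|m2 r]] // k T S T' /= hs ha hk hE hT.
all: have h1 := ha m1 (mem_head _ _).
all: have h2 : (2 <= m2)%N by apply: ha; rewrite in_cons mem_head orbT.
all: have ok1 : odd k = false by apply/negbTE.
all: rewrite bw_cons bw_cons /= ok1 catA foldl_cat.
- case: r hs hT ha => // _ hT _; rewrite /= addn0 in hT.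
  have -> : T' = (T + 3 * m1 + 3 * m2 - 2)%N by lia.
  exact: Eb_pair.
- apply: (IH r k.+2 (T + 3 * m1 + 3 * m2 - 2)%N) => //.
  + by move: hs; rewrite mulnS; case.
  + by move=> ai hi; apply: ha; rewrite !in_cons hi !orbT.
  + by rewrite /= negbK.
  + exact/Eb'_Eb/Eb_pair.
  + lia.
Qed.

Lemma finalA T w : Ea' T (tl_word w) -> (size (Jpoly w) <= T + 3)%N.
Proof.
rewrite /Jpoly; case: (tl_word w) => c a b c12 c21 [*].
have -> : c * Dp ^+ 2 + (a + b) * ('X * Dp) + (c12 + c21) * 'X^2 =
  'X^4 * c + ('X^2 * c + 'X^2 * c) + c - ('X^3 * (a + b) + 'X * (a + b))
  + 'X^2 * (c12 + c21) by rewrite /Dp; ring.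
szb.
Qed.

Lemma finalB T w : Eb' T (tl_word w) ->
  size (Jpoly w) = (T + 3)%N /\ lead_coef (Jpoly w) = 1.
Proof.
rewrite /Jpoly; case: (tl_word w) => c a b c12 c21 [[q [HP Hq]] [*]].
have Hc12 : c12 = 'X^T + (q - c) by rewrite -[c12](addKr c) HP; ring.
set R := 'X^4 * c + ('X^2 * c + 'X^2 * c) + c - ('X^3 * (a + b) + 'X * (a + b))
  + 'X^2 * (q - c + c21).
have -> : c * Dp ^+ 2 + (a + b) * ('X * Dp) + (c12 + c21) * 'X^2 = 'X^(T + 2) + R.
  by rewrite Hc12 /R /Dp (exprD _ T 2); ring.
have hR : (size R < size ('X^(T + 2) : {poly int}))%N.
  rewrite size_polyXn ltnS /R; szb.
rewrite size_polyDl // lead_coefDl // size_polyXn lead_coefXn; split => //; lia.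
Qed.

Lemma init_Ea : Ea 0 (TL 1 0 0 0 0).
Proof. by rewrite /= size_poly1 size_poly0. Qed.
Lemma init_Eb : Eb 0 (TL 1 0 0 0 0).
Proof.
rewrite /Eb; split; last by rewrite /= size_poly1 !size_poly0.
by exists (0 : {poly int}); rewrite size_poly0 expr0 !addr0.
Qed.

Unset Implicit Arguments.

Theorem theorem1p6 (L : nat) (a : seq nat) :
  (1 <= L)%N -> size a = (2 * L)%N ->
  ((forall ai, ai \in a -> (1 <= ai)%N) ->
     ldeg (V3 (braid_of_exps a)) <= 3 * (sumn a)%:Z - 2 * L%:Z) /\
  ((forall ai, ai \in a -> (2 <= ai)%N) -> (L <= 4)%N ->
     ldeg (V3 (braid_of_exps a)) = 3 * (sumn a)%:Z - 2 * L%:Z /\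
     llead (V3 (braid_of_exps a)) = 1).
Proof.
case: L => // L _ hs.
have hc : count snd (braid_of_exps a) = 0%N := @count_bw 0 a.
rewrite /ldeg /llead /V3 /= /Jshift hc.
split.
- move=> ha.
  have hge := sumn_ge ha; rewrite hs in hge.
  set T := (3 * sumn a - 2 * L.+1)%N.
  have hT : (T + 2 * L.+1 = 0 + 3 * sumn a)%N by rewrite /T; lia.
  have hJ : (size (Jpoly (braid_of_exps a)) <= T + 3)%N := finalA (@mainA L a 0 0 _ T hs ha isT init_Ea hT).
  have h : ((size (Jpoly (braid_of_exps a))).-1 + 2 * L.+1 <= 3 * sumn a + 2)%N by lia.
  move: h; move: (size _).-1 => k h.
  lia.
- move=> ha _.
  have ha1 : forall ai, ai \in a -> (1 <= ai)%N by move=> ai /ha; lia.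
  have hge := sumn_ge ha1; rewrite hs in hge.
  set T := (3 * sumn a - 2 * L.+1)%N.
  have hT : (T + 2 * L.+1 = 0 + 3 * sumn a)%N by rewrite /T; lia.
  have [hJ hl] : size (Jpoly (braid_of_exps a)) = (T + 3)%N /\ lead_coef (Jpoly (braid_of_exps a)) = 1 := finalB (@mainB L a 0 0 _ T hs ha isT init_Eb hT).
  rewrite hl hJ; split => //.
  have -> : (T + 3).-1 = (T + 2)%N by lia.
  move: hT; clearbody T => hT; lia.
Qed.
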